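(* Let $n\ge2$, let $f:2^{[n]}\to\mathbb{R}_+$ be monotone submodular, and let $\mathbf{x}=(x,\dots,x)\in[0,1]^n$ with $x\le 1/(n-1)$ or $x\ge(n-2)/(n-1)$. Then $f^{+}(\mathbf{x})/f^{++}(\mathbf{x})\le4/3$ (with the convention $0/0=1$).
   Context: $[n]=\{1,\dots,n\}$. A set function $f:2^{[n]}\to\mathbb{R}_+$ is monotone if $f(S)\le f(T)$ for $S\subseteq T$, submodular if $f(S)+f(T)\ge f(S\cap T)+f(S\cup T)$. For $\mathbf{x}\in[0,1]^n$: the concave closure $f^{+}(\mathbf{x})=\max\sum_{S\subseteq[n]}\theta(S)f(S)$ over $\theta:2^{[n]}\to\mathbb{R}_{\ge0}$ with $\sum_S\theta(S)=1$ and $\sum_{S\ni i}\theta(S)=x_i$ for all $i$; the upper pairwise independent extension $f^{++}(\mathbf{x})$ is the same maximum with the additional constraints $\sum_{S\ni i,j}\theta(S)=x_ix_j$ for all $i<j$. *)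

(* Defs.v *)
From HB Require Import structures.
From mathcomp Require Import all_boot all_order all_algebra.
From mathcomp Require Import boolp classical_sets reals.
Set Implicit Arguments. Unset Strict Implicit. Unset Printing Implicit Defensive.
Import Order.TTheory GRing.Theory Num.Theory.
Local Open Scope ring_scope.

Definition monotone_fn (R : realType) (n : nat) (f : {set 'I_n} -> R) :=
  forall S T : {set 'I_n}, S \subset T -> f S <= f T.

Definition submodular_fn (R : realType) (n : nat) (f : {set 'I_n} -> R) :=
  forall S T : {set 'I_n}, f (S :&: T) + f (S :|: T) <= f S + f T.

Definition nonneg_fn (R : realType) (n : nat) (f : {set 'I_n} -> R) :=
  forall S : {set 'I_n}, 0 <= f S.

Definition feasible_plus (R : realType) (n : nat) (x : 'I_n -> R)
  (theta : {set 'I_n} -> R) :=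
  [/\ forall S, 0 <= theta S,
      \sum_(S : {set 'I_n}) theta S = 1 &
      forall i : 'I_n, \sum_(S : {set 'I_n} | i \in S) theta S = x i].

Definition feasible_pplus (R : realType) (n : nat) (x : 'I_n -> R)
  (theta : {set 'I_n} -> R) :=
  feasible_plus x theta /\
  forall i j : 'I_n, (i < j)%N ->
    \sum_(S : {set 'I_n} | (i \in S) && (j \in S)) theta S = x i * x j.

Definition objective (R : realType) (n : nat) (f : {set 'I_n} -> R)
  (theta : {set 'I_n} -> R) := \sum_(S : {set 'I_n}) theta S * f S.

(* the maximum is taken as a supremum (it is attained: compact polytope) *)
Definition concave_closure (R : realType) (n : nat) (f : {set 'I_n} -> R)
  (x : 'I_n -> R) : R :=
  sup [set v | exists theta, feasible_plus x theta /\ v = objective f theta].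

Definition upper_pairwise_ext (R : realType) (n : nat) (f : {set 'I_n} -> R)
  (x : 'I_n -> R) : R :=
  sup [set v | exists theta, feasible_pplus x theta /\ v = objective f theta].

(* Main.v *)
Require Import Defs.
From HB Require Import structures.
From mathcomp Require Import all_boot all_order all_algebra.
From mathcomp Require Import boolp classical_sets reals.
From mathcomp Require Import ring lra.
Import Order.TTheory GRing.Theory Num.Theory.
Local Open Scope ring_scope.


Set Implicit Arguments. Unset Strict Implicit.
Section H.
Variable R : realType.
Variable n : nat.
Implicit Types (S T : {set 'I_n}).

Lemma sum_delta (A : {set 'I_n}) (h : {set 'I_n} -> R) :
  \sum_S (S == A)%:R * h S = h A.
Proof.
rewrite (bigD1 A) //= eqxx mul1r big1 ?addr0 // => S /negPf ->; by rewrite mul0r.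
Qed.

Lemma sum_indic (P : pred 'I_n) : \sum_i (P i)%:R = #|P|%:R :> R.
Proof.
rewrite -sumr_const [RHS]big_mkcond /=; apply: eq_bigr => i _.
by rewrite unfold_in; case: (P i).
Qed.

Variable f : {set 'I_n} -> R.
Hypothesis fmon : forall S T : {set 'I_n}, S \subset T -> f S <= f T.
Hypothesis fsub : forall S T : {set 'I_n}, f (S :&: T) + f (S :|: T) <= f S + f T.

Lemma ubA S : f S <= f finset.set0 + \sum_i (i \in S)%:R * (f [set i] - f finset.set0).
Proof.
move: {2}#|S| (erefl #|S|) => k; elim: k S => [|k IH] S hk.
  move/eqP: hk; rewrite cards_eq0 => /eqP ->.
  by rewrite big1 ?addr0 // => i _; rewrite inE mul0r.
have [i iS] : exists i, i \in S.
  apply/set0Pn; by rewrite -card_gt0 hk.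
have hk' : #|S :\ i| = k by rewrite (cardsD1 i) iS in hk; case: hk.
have := IH _ hk'.
have := fsub (S :\ i) [set i].
have -> : (S :\ i) :&: [set i] = finset.set0.
  by apply/setP=> j; rewrite !inE andbC; case: eqP => // ->; rewrite eqxx.
have -> : (S :\ i) :|: [set i] = S.
  by rewrite finset.setUC finset.setD1K.
move=> h1 h2.
rewrite (bigD1 i) //= iS mul1r.
have -> : \sum_(j | j != i) (j \in S)%:R * (f [set j] - f finset.set0)
   = \sum_j (j \in S :\ i)%:R * (f [set j] - f finset.set0).
  rewrite [RHS](bigD1 i) //= !inE eqxx /= mul0r add0r.
  by apply: eq_bigr => j ji; rewrite !inE ji.
lra.
Qed.

Lemma ubB S : f S <= f [set: 'I_n] - \sum_i (i \notin S)%:R * (f [set: 'I_n] - f (~: [set i])).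
Proof.
move: {2}#|~: S| (erefl #|~: S|) => k; elim: k S => [|k IH] S hk.
  move/eqP: hk; rewrite cards_eq0 => /eqP hS.
  have -> : S = [set: 'I_n] by rewrite -[S]finset.setCK hS finset.setC0.
  by rewrite big1 ?subr0 // => i _; rewrite inE mul0r.
have [i iS] : exists i, i \in ~: S.
  apply/set0Pn; by rewrite -card_gt0 hk.
have hk' : #|~: (i |: S)| = k.
  rewrite (cardsD1 i) iS in hk; case: hk => <-.
  by apply: eq_card => j; rewrite !inE negb_or.
have := IH _ hk'.
have := fsub (i |: S) (~: [set i]).
rewrite inE in iS.
have -> : (i |: S) :&: ~: [set i] = S.
  apply/setP=> j; rewrite !inE; case: eqP => [->|] /=; by rewrite ?(negPf iS) ?andbT.
have -> : (i |: S) :|: ~: [set i] = [set: 'I_n].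
  by apply/setP=> j; rewrite !inE; case: eqP; rewrite ?orbT.
move=> h1 h2.
rewrite (bigD1 i) //= iS mul1r.
have -> : \sum_(j | j != i) (j \notin S)%:R * (f [set: 'I_n] - f (~: [set j]))
   = \sum_j (j \notin i |: S)%:R * (f [set: 'I_n] - f (~: [set j])).
  rewrite [RHS](bigD1 i) //= !inE eqxx /= mul0r add0r.
  by apply: eq_bigr => j ji; rewrite !inE (negPf ji).
lra.
Qed.
End H.

Section G.
Variable R : realType.
Variable n : nat.
Implicit Types (S : {set 'I_n}).

Lemma filt (th : {set 'I_n} -> R) (P : pred {set 'I_n}) :
  \sum_(S | P S) th S = \sum_S th S * (P S)%:R.
Proof. rewrite big_mkcond; apply: eq_bigr => S _; by case: (P S); rewrite ?mulr1 ?mulr0. Qed.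

Lemma sum_marg (xv : 'I_n -> R) th (g : 'I_n -> R) : feasible_plus xv th ->
  \sum_S th S * (\sum_i (i \in S)%:R * g i) = \sum_i xv i * g i.
Proof.
case=> _ _ hm.
under eq_bigr do rewrite mulr_sumr.
rewrite exchange_big /=; apply: eq_bigr => i _.
rewrite -hm mulr_suml [RHS]big_mkcond; apply: eq_bigr => S _. have [hi|hi] := boolP (i \in S); by rewrite ?(negPf hi) ?hi ?mul1r ?mul0r ?mulr0.
Qed.

Lemma obj_le (th : {set 'I_n} -> R) f U : (forall S, 0 <= th S) ->
  (forall S, f S <= U S) -> objective f th <= \sum_S th S * U S.
Proof. move=> h0 hU; apply: ler_sum => S _; exact: ler_wpM2l. Qed.

Lemma sum_one (th : {set 'I_n} -> R) (xv : 'I_n -> R) c : feasible_plus xv th ->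
  \sum_S th S * c = c.
Proof. case=> _ h1 _; by rewrite -mulr_suml h1 mul1r. Qed.

Definition mk (a b p : R) (T : 'I_n -> {set 'I_n}) (S : {set 'I_n}) : R :=
  a * (S == finset.set0)%:R + b * (S == [set: 'I_n])%:R + p * \sum_k (S == T k)%:R.

Lemma mk_sum a b p T h :
  \sum_S mk a b p T S * h S = a * h finset.set0 + b * h [set: 'I_n] + p * \sum_k h (T k).
Proof.
rewrite /mk; under eq_bigr do rewrite !mulrDl.
rewrite !big_split /=.
rewrite -!sum_delta; rewrite !mulr_sumr.
congr (_ + _ + _).
- by apply: eq_bigr => S _; rewrite mulrA.
- by apply: eq_bigr => S _; rewrite mulrA.
- transitivity (\sum_k \sum_S (S == T k)%:R * (p * h S)).
    rewrite exchange_big /=; apply: eq_bigr => S _.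
    rewrite mulr_sumr mulr_suml; apply: eq_bigr => k _.
    by rewrite mulrCA mulrA.
  by apply: eq_bigr => k _; rewrite sum_delta.
Qed.
End G.

Lemma arithA (R : realType) (x f0 F G o : R) : 0 <= x <= 1 -> 0 <= f0 -> f0 <= F ->
  F - f0 <= G -> o <= f0 + x * G -> o <= F ->
  o <= 4/3 * (f0 + (x - x^2) * G + x^2 * (F - f0)).
Proof.
move=> /andP[x0 x1] f00 fF hG o1 o2.
have hH : 0 <= F - f0 by lra.
have hxG : 0 <= x * G by apply: mulr_ge0 => //; lra.
have [c|c] := lerP (x * G) (F - f0).
- have P1 : 0 <= x^2 * ((F - f0) - x * G) by apply: mulr_ge0; [exact: sqr_ge0|lra].
  have P2 : 0 <= (x - 1/2)^2 * (x * G) by apply: mulr_ge0 => //; exact: sqr_ge0.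
  nra.
- have P1 : 0 <= (1 - x) * (x * G - (F - f0)) by apply: mulr_ge0; lra.
  have P2 : 0 <= (x - 1/2)^2 * (F - f0) by apply: mulr_ge0 => //; exact: sqr_ge0.
  nra.
Qed.

Lemma arithB (R : realType) (y f0 F D o : R) : 0 <= y <= 1/2 -> 0 <= f0 -> 0 <= D ->
  D <= F - f0 -> o <= F - y * D ->
  o <= 4/3 * (F - y^2 * (F - f0) - (1 - y) * y * D).
Proof.
move=> /andP[y0 y1] f00 D0 hD o1.
have hH : 0 <= F - f0 by lra.
have [c|c] := lerP 0 (1 - 4 * y).
- have P1 : 0 <= y * (1 - 4 * y) * ((F - f0) - D) by apply: mulr_ge0; [apply: mulr_ge0|lra].
  have P2 : 0 <= (1 - y) * (F - f0) by apply: mulr_ge0; lra.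
  nra.
- have P1 : 0 <= y * D * (4 * y - 1) by apply: mulr_ge0; [apply: mulr_ge0|lra].
  have P2 : 0 <= (1 - 2 * y) * (1 + 2 * y) * (F - f0) by apply: mulr_ge0; [apply: mulr_ge0|]; lra.
  nra.
Qed.

Section C.
Variable R : realType.
Variable n : nat.

Lemma c1 (i : 'I_n) : \sum_k (i \in [set k])%:R = 1 :> R.
Proof.
rewrite (bigD1 i) //= inE eqxx big1 ?addr0 // => k ki; by rewrite inE eq_sym (negPf ki).
Qed.

Lemma c2 (i j : 'I_n) : i != j -> \sum_k ((i \in [set k]) && (j \in [set k]))%:R = 0 :> R.
Proof.
move=> ij; rewrite big1 // => k _; rewrite !inE; case: eqP => [<-|] //=.
by rewrite eq_sym (negPf ij).
Qed.

Lemma sum1 : \sum_(k < n) 1 = n%:R :> R.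
Proof. by rewrite sumr_const card_ord. Qed.

Lemma c3 (i : 'I_n) : \sum_k (i \in ~: [set k])%:R = n%:R - 1 :> R.
Proof.
transitivity (\sum_(k < n) (1 - (i \in [set k])%:R : R)).
  by apply: eq_bigr => k _; rewrite !inE; case: (i == k) => /=; ring.
by rewrite sumrB sum1 c1.
Qed.

Lemma c4 (i j : 'I_n) : i != j ->
  \sum_k ((i \in ~: [set k]) && (j \in ~: [set k]))%:R = n%:R - 2 :> R.
Proof.
move=> ij.
transitivity (\sum_(k < n) (1 - (i \in [set k])%:R - (j \in [set k])%:R : R)).
  apply: eq_bigr => k _; rewrite !inE.
  case: eqP => [<-|_] /=; first by rewrite eq_sym (negPf ij) /=; ring.
  by case: (j == k) => /=; ring.
rewrite !sumrB sum1 !c1; lra.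
Qed.
End C.

Theorem mainTheorem13 (R : realType) (n : nat) (f : {set 'I_n} -> R) (x : R) :
  (2 <= n)%N ->
  nonneg_fn f -> monotone_fn f -> submodular_fn f ->
  0 <= x <= 1 ->
  (x <= 1 / (n%:R - 1) \/ (n%:R - 2) / (n%:R - 1) <= x) ->
  let xv := fun _ : 'I_n => x in
  (* f^+(x) / f^++(x) <= 4/3 with 0/0 = 1, written without division *)
  concave_closure f xv <= 4 / 3 * upper_pairwise_ext f xv.
Proof.
move=> n2 fnn fmon fsub hx hcase.
change (concave_closure f (fun _ : 'I_n => x) <= 4 / 3 * upper_pairwise_ext f (fun _ : 'I_n => x)).
set xv := fun _ : 'I_n => x.
set f0 := f finset.set0; set F := f [set: 'I_n].
have hN : 2 <= n%:R :> R by rewrite (ler_nat R 2).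
have objF : forall th, feasible_plus xv th -> objective f th <= F.
  move=> th hth; apply: le_trans (obj_le (U := fun _ => F) _ _) _.
  - by case: hth.
  - by move=> S; apply: fmon; exact: finset.subsetT.
  by rewrite (sum_one _ hth).
have fin : forall L, (exists th0, feasible_pplus xv th0 /\ objective f th0 = L) ->
    (forall th, feasible_plus xv th -> objective f th <= 4/3 * L) ->
    concave_closure f xv <= 4 / 3 * upper_pairwise_ext f xv.
  move=> L [th0 [h0 e0]] hall.
  apply: (@le_trans _ _ (4/3 * L)).
    apply: ge_sup; first by exists L, th0; split => //; case: h0.
    by move=> v [th [hth ->]]; exact: hall.
  apply: ler_wpM2l; first lra.
  apply: sup_upper_bound; last by exists th0.
  split; first by exists L, th0.
  by exists F => v [th [[hth _] ->]]; exact: objF.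
set G := \sum_i (f [set i] - f0).
set D := \sum_i (F - f (~: [set i])).
have f0F : f0 <= F by apply: fmon; exact: finset.sub0set.
have f00 : 0 <= f0 by apply: fnn.
have bA : forall th, feasible_plus xv th -> objective f th <= f0 + x * G.
  move=> th hth.
  apply: le_trans (obj_le (U := fun S => f0 + \sum_i (i \in S)%:R * (f [set i] - f0)) _ _) _.
  - by case: hth.
  - by move=> S; apply: ubA.
  under eq_bigr do rewrite mulrDr.
  by rewrite big_split /= (sum_one _ hth) (sum_marg _ hth) /G mulr_sumr.
have GH : F - f0 <= G.
  have := ubA fsub [set: 'I_n].
  rewrite -/F -/f0 /G.
  have -> : \sum_i (i \in [set: 'I_n])%:R * (f [set i] - f0) = \sum_i (f [set i] - f0).
    by apply: eq_bigr => i _; rewrite inE mul1r.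
  lra.
have bB : forall th, feasible_plus xv th -> objective f th <= F - (1 - x) * D.
  move=> th hth.
  apply: le_trans (obj_le (U := fun S => F - D + \sum_i (i \in S)%:R * (F - f (~: [set i]))) _ _) _.
  - by case: hth.
  - move=> S; apply: le_trans (ubB fsub S) _.
    have -> : \sum_i (i \notin S)%:R * (F - f (~: [set i])) =
        D - \sum_i (i \in S)%:R * (F - f (~: [set i])).
      rewrite /D -sumrB; apply: eq_bigr => i _; case: (i \in S) => /=; ring.
    by rewrite -/F; lra.
  under eq_bigr do rewrite mulrDr.
  rewrite big_split /= (sum_one _ hth) (sum_marg _ hth) /D -mulr_sumr; lra.
have DH : D <= F - f0.
  have := ubB fsub finset.set0.
  rewrite -/F -/f0.
  have -> : \sum_i (i \notin finset.set0)%:R * (F - f (~: [set i])) = D.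
    by apply: eq_bigr => i _; rewrite inE mul1r.
  lra.
have D0 : 0 <= D.
  apply: sumr_ge0 => i _; rewrite subr_ge0; apply: fmon; exact: finset.subsetT.
have hN1 : 0 < n%:R - 1 :> R by lra.
have [c|c] := lerP x (1 / (n%:R - 1)).
- rewrite ler_pdivlMr // in c.
  set a := (1 - x) * (1 - (n%:R - 1) * x).
  have a0 : 0 <= a by rewrite /a; case/andP: hx => ? ?; nra.
  pose th0 : {set 'I_n} -> R := mk a (x ^ 2) (x - x ^ 2) (fun k => [set k]).
  have eS : \sum_k f [set k] = G + n%:R * f0.
    by rewrite /G sumrB sumr_const card_ord mulr_natl addrNK.
  apply: (fin (a * f0 + x^2 * F + (x - x^2) * \sum_k f [set k])).
    exists th0; split; last by rewrite /objective mk_sum.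
    split.
    + split.
      * move=> S; rewrite /th0 /mk; case/andP: hx => ? ?.
        apply: addr_ge0; first apply: addr_ge0; apply: mulr_ge0 => //; try nra.
        by apply: sumr_ge0 => k _; rewrite ler0n.
      * rewrite (eq_bigr (fun S => th0 S * 1)); last by move=> S _; rewrite mulr1.
        rewrite mk_sum sum1 /a; ring.
      * move=> i; rewrite filt mk_sum c1 !inE /xv /=; ring.
    + move=> i j hij.
      have ij : i != j by rewrite -val_eqE /= neq_ltn hij.
      rewrite filt mk_sum c2 // !inE /xv /=; ring.
  move=> th hth.
  have eL : a * f0 + x^2 * F + (x - x^2) * \sum_k f [set k]
      = f0 + (x - x^2) * G + x^2 * (F - f0) by rewrite eS /a; ring.
  rewrite eL; apply: arithA => //; [exact: bA|exact: objF].
- have c' : 1 < x * (n%:R - 1) by rewrite ltr_pdivrMr // in c.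
  have hB : n%:R - 2 <= x * (n%:R - 1).
    case: hcase => h; first by exfalso; move: h; rewrite ler_pdivlMr //; lra.
    by rewrite ler_pdivrMr in h.
  have x12 : 1/2 <= x by case/andP: hx => ? ?; nra.
  set b := (n%:R - 1) * x ^ 2 - (n%:R - 2) * x.
  have b0 : 0 <= b by rewrite /b; case/andP: hx => ? ?; nra.
  pose th0 : {set 'I_n} -> R := mk ((1 - x) ^ 2) b (x - x ^ 2) (fun k => ~: [set k]).
  have eS : \sum_k f (~: [set k]) = n%:R * F - D.
    by rewrite /D sumrB sumr_const card_ord mulr_natl opprB addrC subrK.
  apply: (fin ((1 - x) ^ 2 * f0 + b * F + (x - x^2) * \sum_k f (~: [set k]))).
    exists th0; split; last by rewrite /objective mk_sum.
    split.
    + split.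
      * move=> S; rewrite /th0 /mk; case/andP: hx => ? ?.
        apply: addr_ge0; first apply: addr_ge0; apply: mulr_ge0 => //; try nra.
        by apply: sumr_ge0 => k _; rewrite ler0n.
      * rewrite (eq_bigr (fun S => th0 S * 1)); last by move=> S _; rewrite mulr1.
        rewrite mk_sum sum1 /b; ring.
      * move=> i; rewrite filt mk_sum c3 !inE /xv /b /=; ring.
    + move=> i j hij.
      have ij : i != j by rewrite -val_eqE /= neq_ltn hij.
      rewrite filt mk_sum c4 // !inE /xv /b /=; ring.
  move=> th hth.
  have eL : (1 - x) ^ 2 * f0 + b * F + (x - x^2) * \sum_k f (~: [set k])
      = F - (1 - x)^2 * (F - f0) - (1 - (1 - x)) * (1 - x) * D by rewrite eS /b; ring.
  rewrite eL; apply: arithB => //.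
  + by case/andP: hx => ? ?; apply/andP; split; lra.
  + exact: bB.
Qed.
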